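(* For all integers $p\ge1$ and $M,N\ge1$, $\lim_{r\to\infty}d_p^r(M,N)=\delta_p(M,N)$.
   Context: For integers $M,N,p,r\ge1$, consider triples $(i,a,b)$ with $i\in\mathbb Z_M^r$, $a\in\mathbb Z_M^p$, $b\in\mathbb Z_N^p$, with cyclic conventions $i_{r+1}=i_1$, $b_{p+1}=b_1$. For $x\in\{1,\dots,r\}$, condition $(E_x)$ says that the multisets $\{(i_x+a_y,b_y),(i_{x+1}+a_y,b_{y+1}):y=1,\dots,p\}$ and $\{(i_x+a_y,b_{y+1}),(i_{x+1}+a_y,b_y):y=1,\dots,p\}$ of elements of $\mathbb Z_M\times\mathbb Z_N$ (counted with multiplicity) coincide. Define $d_p^r(M,N)=\frac{1}{M^{p+r}N^p}\#\{(i,a,b):(E_x)\text{ holds for all }x\}$ and $\delta_p(M,N)=\frac{1}{(MN)^p}\#\{(a,b)\in\mathbb Z_M^p\times\mathbb Z_N^p:\{(a_y,b_y)\}_{y=1}^p=\{(a_y,b_{y+1})\}_{y=1}^p\text{ as multisets}\}$. *)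

(* Defs.v *)
From HB Require Import structures.
From mathcomp Require Import all_boot all_order all_algebra.
Set Implicit Arguments. Unset Strict Implicit. Unset Printing Implicit Defensive.
Import Order.TTheory GRing.Theory Num.Theory.

(* Z_M is represented by 'I_M (residues 0..M-1); addition in Z_M is
   (u + v) %% M.  An element of Z_M x Z_N is represented by the pair of
   natural-number residues (u, v) with u < M, v < N.  Index y+1 (cyclic,
   mod p) is ordS y; index x+1 (cyclic, mod r) is ordS x. *)

(* the multiset {(i_x+a_y,b_y),(i_{x+1}+a_y,b_{y+1}) : y} as a sequence *)
Definition lhs_ms (M N p r : nat) (i : {ffun 'I_r -> 'I_M})
  (a : {ffun 'I_p -> 'I_M}) (b : {ffun 'I_p -> 'I_N}) (x : 'I_r) : seq (nat * nat) :=
  flatten [seq [:: (((i x + a y) %% M)%N, val (b y));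
                   (((i (ordS x) + a y) %% M)%N, val (b (ordS y)))] | y <- enum 'I_p].

Definition rhs_ms (M N p r : nat) (i : {ffun 'I_r -> 'I_M})
  (a : {ffun 'I_p -> 'I_M}) (b : {ffun 'I_p -> 'I_N}) (x : 'I_r) : seq (nat * nat) :=
  flatten [seq [:: (((i x + a y) %% M)%N, val (b (ordS y)));
                   (((i (ordS x) + a y) %% M)%N, val (b y))] | y <- enum 'I_p].

Definition Econd (M N p r : nat) (i : {ffun 'I_r -> 'I_M})
  (a : {ffun 'I_p -> 'I_M}) (b : {ffun 'I_p -> 'I_N}) (x : 'I_r) : bool :=
  perm_eq (lhs_ms i a b x) (rhs_ms i a b x).

Definition dpr (p r M N : nat) : rat :=
  (#|[pred t : {ffun 'I_r -> 'I_M} * {ffun 'I_p -> 'I_M} * {ffun 'I_p -> 'I_N}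
       | [forall x : 'I_r, Econd t.1.1 t.1.2 t.2 x]]|%:R
   / (M ^ (p + r) * N ^ p)%:R)%R.

Definition deltap (p M N : nat) : rat :=
  (#|[pred t : {ffun 'I_p -> 'I_M} * {ffun 'I_p -> 'I_N}
       | perm_eq [seq (val (t.1 y), val (t.2 y)) | y <- enum 'I_p]
                 [seq (val (t.1 y), val (t.2 (ordS y))) | y <- enum 'I_p]]|%:R
   / ((M * N) ^ p)%:R)%R.

(* Main.v *)
Require Import Defs.
From HB Require Import structures.
From mathcomp Require Import all_boot all_order all_algebra.
From mathcomp Require Import zify ring lra.
Import Order.TTheory GRing.Theory Num.Theory.
Set Implicit Arguments. Unset Strict Implicit. Unset Printing Implicit Defensive.

Definition L1 (M N p : nat) (a : {ffun 'I_p -> 'I_M}) (b : {ffun 'I_p -> 'I_N}) :=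
  [seq (val (a y), val (b y)) | y <- enum 'I_p].
Definition L2 (M N p : nat) (a : {ffun 'I_p -> 'I_M}) (b : {ffun 'I_p -> 'I_N}) :=
  [seq (val (a y), val (b (ordS y))) | y <- enum 'I_p].
Definition pw (M w : nat) (z q : nat * nat) : bool := (((w + q.1) %% M)%N, q.2) == z.

Lemma count_fl (T : eqType) (S : Type) (f g : S -> T) (s : seq S) z :
  count_mem z (flatten [seq [:: f y; g y] | y <- s]) =
  (count_mem z (map f s) + count_mem z (map g s))%N.
Proof. elim: s => //= y s ->; lia. Qed.

Lemma Econd_count (M N p r : nat) (i : {ffun 'I_r -> 'I_M}) (a : {ffun 'I_p -> 'I_M}) (b : {ffun 'I_p -> 'I_N}) x :
  Econd i a b x <-> forall z,
   (count (pw M (i x) z) (L1 a b) + count (pw M (i (ordS x)) z) (L2 a b) =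
    count (pw M (i x) z) (L2 a b) + count (pw M (i (ordS x)) z) (L1 a b))%N.
Proof.
rewrite /Econd /lhs_ms /rhs_ms; split.
  move/permP => H z; move: (H (pred1 z)); rewrite !count_fl /L1 /L2 !count_map.
  by [].
move=> H; apply/allP => z _ /=; apply/eqP.
rewrite !count_fl; move: (H z); rewrite /L1 /L2 !count_map.
by [].
Qed.

Lemma good_E (M N p r : nat) (i : {ffun 'I_r -> 'I_M}) (a : {ffun 'I_p -> 'I_M}) (b : {ffun 'I_p -> 'I_N}) x :
  perm_eq (L1 a b) (L2 a b) -> Econd i a b x.
Proof. move/permP=> H; apply/(proj2 (Econd_count i a b x)) => z; by rewrite !H addnC. Qed.

Lemma memL1 (M N p : nat) (a : {ffun 'I_p -> 'I_M}) (b : {ffun 'I_p -> 'I_N}) q :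
  q \in L1 a b -> (q.1 < M)%N.
Proof. by rewrite /L1 => /mapP [y _ ->] /=. Qed.
Lemma memL2 (M N p : nat) (a : {ffun 'I_p -> 'I_M}) (b : {ffun 'I_p -> 'I_N}) q :
  q \in L2 a b -> (q.1 < M)%N.
Proof. by rewrite /L2 => /mapP [y _ ->] /=. Qed.

Lemma count_map' (T1 T2 : Type) (f : T1 -> T2) (P : pred T2) s :
  count P (map f s) = count (fun x => P (f x)) s.
Proof. by elim: s => //= x s ->. Qed.

Lemma cnt2 (M N p : nat) (a : {ffun 'I_p -> 'I_M}) (b : {ffun 'I_p -> 'I_N}) t :
  count (fun q => q.2 == t) (L1 a b) = count (fun q => q.2 == t) (L2 a b).
Proof.
rewrite /L1 /L2 !count_map' -enumT.
transitivity (count (fun y => val (b y) == t) (enum 'I_p)); first by [].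
transitivity (count (fun y => val (b y) == t) (map (@ordS p) (enum 'I_p))); last first.
  by rewrite count_map'.
apply/permP; apply: uniq_perm; first exact: enum_uniq.
  by rewrite (map_inj_uniq (@ordS_inj p)) enum_uniq.
move=> y; rewrite mem_enum; symmetry; apply/mapP; exists (ord_pred y).
  by rewrite mem_enum.
by rewrite ord_predK.
Qed.

Lemma sumA (M : nat) (L : seq (nat * nat)) t :
  (forall q, q \in L -> q.1 < M)%N ->
  (\sum_(k < M) count (fun q => (q.1 == k %[mod M]) && (q.2 == t)) L =
   count (fun q => q.2 == t) L)%N.
Proof.
elim: L => [|q L IH] H /=; first by rewrite big1.
rewrite big_split /= IH; last by move=> q' hq'; apply: H; rewrite inE hq' orbT.
congr (_ + _)%N.
have hq : (q.1 < M)%N by apply: H; rewrite inE eqxx.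
rewrite (bigD1 (Ordinal hq)) //= big1 ?addn0; first by rewrite eqxx.
move=> k hk; rewrite !modn_small //.
case: eqP => // e; move: hk; suff -> : k = Ordinal hq by rewrite eqxx.
by apply: val_inj => /=.
Qed.

Lemma pwA M w k s t L : s = (w + k)%N ->
  count (pw M w ((s %% M)%N, t)) L = count (fun q : nat * nat => (q.1 == k %[mod M]) && (q.2 == t)) L.
Proof. by move=> ->; apply: eq_count => q; rewrite /pw xpair_eqE eqn_modDl. Qed.

Lemma pw_mod M w z : pw M (w %% M) z =1 pw M w z.
Proof. by move=> q; rewrite /pw modnDml. Qed.

Lemma shift1 (M N p r : nat) (i : {ffun 'I_r -> 'I_M}) (a : {ffun 'I_p -> 'I_M}) (b : {ffun 'I_p -> 'I_N}) x :
  (0 < M)%N -> val (i (ordS x)) = ((i x + 1) %% M)%N -> Econd i a b x ->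
  perm_eq (L1 a b) (L2 a b).
Proof.
move=> M0 hv /Econd_count H.
set u := val (i x).
pose A L k t := count (fun q : nat * nat => (q.1 == k %[mod M]) && (q.2 == t)) L.
have step : forall k t, (A (L1 a b) k.+1 t + A (L2 a b) k t = A (L2 a b) k.+1 t + A (L1 a b) k t)%N.
  move=> k t; move: (H ((u + k.+1) %% M, t)%N); rewrite hv.
  rewrite !(eq_count (pw_mod M (u+1) _)).
  by rewrite !(@pwA M u k.+1) // !(@pwA M (u+1) k) //; lia.
have gen : forall k t, (A (L1 a b) k t + A (L2 a b) 0 t = A (L2 a b) k t + A (L1 a b) 0 t)%N.
  elim=> [|k IH] t; first by rewrite addnC.
  by have := step k t; have := IH t; lia.
have eq0 : forall t, A (L1 a b) 0 t = A (L2 a b) 0 t.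
  move=> t.
  have : (\sum_(k < M) (A (L1 a b) k t + A (L2 a b) 0 t) = \sum_(k < M) (A (L2 a b) k t + A (L1 a b) 0 t))%N.
    by apply: eq_bigr => k _; exact: gen.
  rewrite /= !big_split /= !sum_nat_const card_ord.
  rewrite /A !sumA ?cnt2; try exact: memL1; try exact: memL2.
  by move/eqP; rewrite eqn_add2l eqn_pmul2l // => /eqP.
have eqk : forall k t, A (L1 a b) k t = A (L2 a b) k t.
  by move=> k t; have := gen k t; rewrite eq0; lia.
apply/allP => [[s t]] _ /=; apply/eqP.
case: (ltnP s M) => hs.
  have := eqk s t; rewrite /A => e.
  rewrite -(eq_in_count (a1 := fun q : nat * nat => (q.1 == s %[mod M]) && (q.2 == t))).
    rewrite e; apply: eq_in_count => -[q1 q2] /memL2 /= hq.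
    by rewrite !modn_small // xpair_eqE.
  by move=> -[q1 q2] /memL1 /= hq; rewrite !modn_small // xpair_eqE.
rewrite (count_memPn _) ?(count_memPn _) //; apply/negP.
  by move/memL2 => /=; lia.
by move/memL1 => /=; lia.
Qed.
Definition chain (M n : nat) (f : {ffun 'I_n -> 'I_M}) : bool :=
  [forall x : 'I_n, forall y : 'I_n,
     (val y == (val x).+1) ==> (val (f y) != ((f x + 1) %% M)%N)].

Definition consF (M n : nat) (t : 'I_M) (g : {ffun 'I_n -> 'I_M}) : {ffun 'I_n.+1 -> 'I_M} :=
  [ffun k => if unlift ord0 k is Some j then g j else t].
Definition decF (M n : nat) (f : {ffun 'I_n.+1 -> 'I_M}) : 'I_M * {ffun 'I_n -> 'I_M} :=
  (f ord0, [ffun j => f (lift ord0 j)]).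

Lemma consF0 M n t (g : {ffun 'I_n -> 'I_M}) : consF t g ord0 = t.
Proof. by rewrite ffunE unlift_none. Qed.
Lemma consFS M n t (g : {ffun 'I_n -> 'I_M}) j : consF t g (lift ord0 j) = g j.
Proof. by rewrite ffunE liftK. Qed.

Lemma sum_cons M n (F : {ffun 'I_n.+1 -> 'I_M} -> nat) :
  (\sum_(f : {ffun 'I_n.+1 -> 'I_M}) F f =
   \sum_(t : 'I_M) \sum_(g : {ffun 'I_n -> 'I_M}) F (consF t g))%N.
Proof.
rewrite (reindex (fun tg : 'I_M * {ffun 'I_n -> 'I_M} => consF tg.1 tg.2)) /=.
  by rewrite pair_big.
apply: onW_bij; exists (@decF M n).
  move=> [t g]; rewrite /decF consF0; congr (_, _); apply/ffunP => j.
  by rewrite ffunE consFS.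
move=> f; apply/ffunP => k; rewrite /decF ffunE /=.
by case: unliftP => [j ->|->]; rewrite ?ffunE.
Qed.

Lemma chain_cons M n t (g : {ffun 'I_n.+1 -> 'I_M}) :
  chain (consF t g) -> (val (g ord0) != ((t + 1) %% M)%N) && chain g.
Proof.
move/forallP => H; apply/andP; split.
  have := H ord0; move/forallP/(_ (lift ord0 ord0))/implyP.
  by rewrite consF0 consFS; apply.
apply/forallP => x; apply/forallP => y; apply/implyP => e.
have := H (lift ord0 x); move/forallP/(_ (lift ord0 y))/implyP.
by rewrite !consFS /= /bump /= !add1n eqSS; apply.
Qed.

Lemma cnt_ne M (c : 'I_M) : (\sum_(t : 'I_M) (val c != ((t + 1) %% M)%N) <= M - 1)%N.
Proof.
have hM : (0 < M)%N by case: c => c' /=; lia.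
pose t0 := Ordinal (ltn_pmod (c + M - 1) hM).
rewrite (bigD1 t0) //=.
have -> : (((c + M - 1) %% M + 1) %% M = c)%N.
  rewrite modnDml (_ : c + M - 1 + 1 = c + M)%N; last by lia.
  by rewrite modnDr modn_small.
rewrite eqxx /= add0n.
apply: (@leq_trans (\sum_(i < M | i != t0) 1)%N); first by apply: leq_sum => i _; exact: leq_b1.
by rewrite sum1_card cardC1 card_ord; lia.
Qed.

Lemma chain_bound M n :
  (\sum_(f : {ffun 'I_n.+1 -> 'I_M}) chain f <= M * (M - 1) ^ n)%N.
Proof.
elim: n => [|n IH].
  apply: (@leq_trans (\sum_(f : {ffun 'I_1 -> 'I_M}) 1)%N); first by apply: leq_sum => i _; exact: leq_b1.
  by rewrite sum1_card card_ffun !card_ord expn1 expn0 muln1.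
rewrite sum_cons.
apply: (@leq_trans (\sum_(t : 'I_M) \sum_(g : {ffun 'I_n.+1 -> 'I_M})
          ((val (g ord0) != ((t + 1) %% M)%N) * chain g))%N).
  apply: leq_sum => t _; apply: leq_sum => g _.
  by case: (chain _) (@chain_cons M n t g) => // /(_ isT) /andP [-> ->].
rewrite exchange_big /=.
apply: (@leq_trans (\sum_(g : {ffun 'I_n.+1 -> 'I_M}) (chain g * (M - 1)))%N).
  apply: leq_sum => g _; rewrite -big_distrl /= mulnC leq_mul2l.
  by rewrite cnt_ne orbT.
by rewrite -big_distrl /= expnS mulnCA mulnC leq_mul2l IH orbT.
Qed.

Lemma card_sum (T : finType) (P : pred T) : #|[pred t : T | P t]| = (\sum_(t : T) P t)%N.
Proof. by rewrite -sum1_card big_mkcond; apply: eq_bigr => t _; rewrite inE; case: (P t). Qed.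

Lemma sum_pair (I J : finType) (F : I * J -> nat) :
  (\sum_(q : I * J) F q = \sum_(i : I) \sum_(j : J) F (i, j))%N.
Proof. by rewrite pair_bigA; apply: eq_bigr => -[i j]. Qed.

Lemma sumS_good (M N p r : nat) (a : {ffun 'I_p -> 'I_M}) (b : {ffun 'I_p -> 'I_N}) :
  perm_eq (L1 a b) (L2 a b) ->
  (\sum_(i : {ffun 'I_r -> 'I_M}) [forall x, Econd i a b x] = M ^ r)%N.
Proof.
move=> G; rewrite (eq_bigr (fun _ => 1%N)); last first.
  by move=> i _; have -> : [forall x, Econd i a b x] by apply/forallP => x; exact: good_E.
by rewrite sum1_card card_ffun !card_ord.
Qed.

Lemma sumS_bad (M N p r : nat) (a : {ffun 'I_p -> 'I_M}) (b : {ffun 'I_p -> 'I_N}) :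
  (0 < M)%N -> ~~ perm_eq (L1 a b) (L2 a b) ->
  (\sum_(i : {ffun 'I_r -> 'I_M}) [forall x, Econd i a b x] <=
   \sum_(i : {ffun 'I_r -> 'I_M}) chain i)%N.
Proof.
move=> M0 nG; apply: leq_sum => i _.
case: (boolP [forall x, Econd i a b x]) => // /forallP S.
have -> : chain i; last by [].
apply/forallP => x; apply/forallP => y; apply/implyP => /eqP e.
apply/negP => /eqP hv.
have hy : ordS x = y.
  apply: val_inj; change ((x.+1 %% r)%N = y); rewrite e modn_small // -e; exact: ltn_ord.
have Ex := S x.
by move: nG; rewrite (@shift1 M N p r i a b x M0 _ Ex) // hy.
Qed.

Lemma bern M n : (0 < M)%N -> (n.+1 * (M - 1) ^ n <= M ^ n.+1)%N.
Proof.
move=> M0; elim: n => [|n IH]; first by rewrite expn0 expn1 mul1n.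
have h2 : ((M - 1) ^ n.+1 <= M ^ n.+1)%N by rewrite leq_exp2r //; lia.
have h3 : ((M - 1) * (n.+1 * (M - 1) ^ n) <= (M - 1) * M ^ n.+1)%N by rewrite leq_mul2l IH orbT.
rewrite [X in (_ <= X)%N]expnS; move: h2 h3; rewrite [(M - 1) ^ n.+1]expnS.
set X := ((M - 1) ^ n)%N; set Y := (M ^ n.+1)%N; nia.
Qed.

Lemma bounds (M N p n cS cG : nat) : (0 < M)%N ->
  cS = #|[pred t : {ffun 'I_n.+1 -> 'I_M} * {ffun 'I_p -> 'I_M} * {ffun 'I_p -> 'I_N}
       | [forall x : 'I_n.+1, Econd t.1.1 t.1.2 t.2 x]]| ->
  cG = #|[pred t : {ffun 'I_p -> 'I_M} * {ffun 'I_p -> 'I_N}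
       | perm_eq [seq (val (t.1 y), val (t.2 y)) | y <- enum 'I_p]
                 [seq (val (t.1 y), val (t.2 (ordS y))) | y <- enum 'I_p]]| ->
  (M ^ n.+1 * cG <= cS)%N && (cS <= M ^ n.+1 * cG + M ^ p * N ^ p * (M * (M - 1) ^ n))%N.
Proof.
move=> M0 hS hG.
have ES : cS = (\sum_(a : {ffun 'I_p -> 'I_M}) \sum_(b : {ffun 'I_p -> 'I_N})
     \sum_(i : {ffun 'I_n.+1 -> 'I_M}) [forall x, Econd i a b x])%N.
  rewrite hS card_sum !sum_pair /= exchange_big /=; apply: eq_bigr => a _.
  exact: exchange_big.
have EG : cG = (\sum_(a : {ffun 'I_p -> 'I_M}) \sum_(b : {ffun 'I_p -> 'I_N})
     perm_eq (L1 a b) (L2 a b))%N.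
  by rewrite hG card_sum !sum_pair.
rewrite ES EG; apply/andP; split.
  rewrite big_distrr; apply: leq_sum => a _; rewrite big_distrr; apply: leq_sum => b _.
  case: (boolP (perm_eq (L1 a b) (L2 a b))) => G /=; last by rewrite muln0.
  by rewrite muln1 sumS_good.
apply: (@leq_trans (\sum_(a : {ffun 'I_p -> 'I_M}) \sum_(b : {ffun 'I_p -> 'I_N})
     (M ^ n.+1 * perm_eq (L1 a b) (L2 a b) + M * (M - 1) ^ n))%N).
  apply: leq_sum => a _; apply: leq_sum => b _.
  case: (boolP (perm_eq (L1 a b) (L2 a b))) => G /=.
    by rewrite sumS_good // muln1 leq_addr.
  rewrite muln0 add0n; apply: leq_trans (chain_bound M n).
  exact: sumS_bad.
under eq_bigr do rewrite big_split /=.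
rewrite big_split /= big_distrr /=.
under [X in (_ <= X + _)%N]eq_bigr do rewrite big_distrr /=.
rewrite leq_add2l !sum_nat_const.
by rewrite !card_ffun !card_ord mulnA.
Qed.

Local Open Scope ring_scope.

Lemma final_rat (M N p r cS cG : nat) (eps : rat) : (0 < M)%N -> (0 < N)%N -> (0 < r)%N ->
  (M ^ r * cG <= cS)%N -> (r * (cS - M ^ r * cG) <= M * (M ^ (p + r) * N ^ p))%N ->
  M%:R < eps * r%:R ->
  `|cS%:R / (M ^ (p + r) * N ^ p)%:R - cG%:R / ((M * N) ^ p)%:R| < eps.
Proof.
move=> M0 N0 r0 h1 hr heps.
have D0 : (0 < (M ^ (p + r) * N ^ p)%:R :> rat) by rewrite ltr0n muln_gt0 !expn_gt0 M0 N0.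
have -> : cG%:R / ((M * N) ^ p)%:R = (M ^ r * cG)%:R / (M ^ (p + r) * N ^ p)%:R :> rat.
  have hM : (M%:R : rat) != 0 by rewrite pnatr_eq0 -lt0n.
  have hN : (N%:R : rat) != 0 by rewrite pnatr_eq0 -lt0n.
  rewrite expnMn expnD !natrM !natrX; field.
  by rewrite !expf_neq0.
rewrite -mulrBl -natrB // ger0_norm; last by rewrite divr_ge0 // ler0n.
rewrite ltr_pdivrMr //.
move: hr; set e := (cS - _)%N => hr.
have hr' : (r%:R * e%:R <= M%:R * (M ^ (p + r) * N ^ p)%:R :> rat) by rewrite -!natrM ler_nat.
have r0' : (0 < r%:R :> rat) by rewrite ltr0n.
move: D0 hr' heps r0'; set D := ((M ^ (p + r) * N ^ p)%:R : rat).
move=> *; nra.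
Qed.

Theorem theorem5p4 (p M N : nat) (hp : (0 < p)%N) (hM : (0 < M)%N) (hN : (0 < N)%N) :
  forall eps : rat, (0 < eps)%R ->
    exists R : nat, forall r : nat, (R <= r)%N ->
      (`|dpr p r M N - deltap p M N| < eps)%R.
Proof.
move=> eps he; exists (Num.Def.archi_bound (M%:R / eps)).+1 => r.
case: r => [|n] hr //.
have /andP [h1 h2] := @bounds M N p n _ _ hM erefl erefl.
apply: (final_rat hM hN (ltn0Sn n) h1).
  rewrite -leq_subLR in h2.
  apply: (leq_trans (leq_mul (leqnn n.+1) h2)).
  apply: (@leq_trans (M * (M ^ p * N ^ p) * (n.+1 * (M - 1) ^ n))).
    by rewrite leq_eqVlt; apply/orP; left; apply/eqP; ring.
  apply: (leq_trans (leq_mul (leqnn (M * (M ^ p * N ^ p))) (bern n hM))).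
  by rewrite leq_eqVlt; apply/orP; left; apply/eqP; rewrite expnD; ring.
have b0 : 0 <= M%:R / eps :> rat by rewrite divr_ge0 // ltW.
have := archi_boundP b0; rewrite ltr_pdivrMr // => hb.
apply: (lt_le_trans hb); rewrite [X in _ <= X]mulrC ler_pM2r // ler_nat; lia.
Qed.
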